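(* Let $N>0$, $P_1\in(0,1)$, $\sigma\ge 0$, $\nu>0$ and $\xi>0$ be real numbers, and let $\alpha(a_1,a_2)\ge 0$ and $\beta(a_1,a_2)\ge 0$ be given for $(a_1,a_2)\in\{0,1\}^2$, with $\alpha(1,0)=\alpha(0,1)=:\alpha$ and $\beta(1,0)=\beta(0,1)=:\beta$. For $S_1\in[0,N]$ and $(a_1,a_2)\in\{0,1\}^2$ put $$\mu_{a_1,a_2}(S_1)=\sigma S_1+\sigma(N-S_1)+a_1\nu S_1+a_2\nu (N-S_1),\qquad \Lambda_{a_1,a_2}(S_1)=\sum_{\eta=0}^{\lceil\xi\rceil-1} e^{-\mu_{a_1,a_2}(S_1)}\frac{\mu_{a_1,a_2}(S_1)^{\eta}}{\eta!},$$ and $$Q^\sharp(S_1)=P_1\sum_{(a_1,a_2)\in\{0,1\}^2}\beta(a_1,a_2)\,\Lambda_{a_1,a_2}(S_1)+(1-P_1)\sum_{(a_1,a_2)\in\{0,1\}^2}\alpha(a_1,a_2)\,\big(1-\Lambda_{a_1,a_2}(S_1)\big).$$ Define $$\Upsilon(\xi)=\big(\alpha(P_1-1)+\beta P_1\big)\big(2+N(\nu+2\sigma)-2\lceil\xi\rceil\big).$$ If $\Upsilon(\xi)>0$, then $Q^\sharp$, as a function of $S_1$, achieves a local minimum at $S_1=N/2$; otherwise it achieves a local maximum at $S_1=N/2$.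
   Context: Setting: a cooperative molecular communication system with a transmitter (TX), $K=2$ receivers $\mathrm{RX}_1,\mathrm{RX}_2$ in a symmetric topology, and a fusion center (FC). The TX sends bit 1 with probability $P_1$. Each $\mathrm{RX}_k$ makes a binary decision and reports a decision 1 by releasing $S_k$ molecules of a common type, with $S_1+S_2=N$ ($S_2=N-S_1$); the FC compares its molecule count with a constant threshold $\xi$, so its error probability is $Q^\sharp$ above, where $\Lambda_{a_1,a_2}$ is the Poisson probability that the FC count is below $\lceil\xi\rceil$ when the current RX decisions are $(a_1,a_2)$. Here $\sigma$ (the same for both receivers by symmetry) is $\sum_{i=1}^{j-1}\hat W_{\mathrm{RX}_k}[i]\sum_{\tilde m=1}^{M_{\mathrm{FC}}}P_k((j-i)T+\tilde m\Delta t_{\mathrm{FC}})$, the per-molecule expected intersymbol interference at the FC from previous RX decisions $\hat W_{\mathrm{RX}_k}[i]\in\{0,1\}$; $\nu=\sum_{\tilde m=1}^{M_{\mathrm{FC}}}P_k(\tilde m\Delta t_{\mathrm{FC}})$ is the per-molecule expected count at the FC from a current RX emission, where $P_k(t)$ is the probability that a molecule released by $\mathrm{RX}_k$ is inside the FC at time $t$, $T$ the symbol interval, and $M_{\mathrm{FC}},\Delta t_{\mathrm{FC}}$ the number of FC samples and the sampling step. $\alpha(a_1,a_2)$ (resp. $\beta(a_1,a_2)$) is the probability that $\mathrm{RX}_1,\mathrm{RX}_2$ decide $(a_1,a_2)$ given the TX sent $0$ (resp. $1$) in the current interval and the given previous TX symbols; symmetry gives the stated equalities. *)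

(* Defs.v *)
From HB Require Import structures.
From mathcomp Require Import all_boot all_order all_algebra.
From mathcomp Require Import all_classical all_reals all_analysis.
Set Implicit Arguments. Unset Strict Implicit. Unset Printing Implicit Defensive.
Import Order.TTheory GRing.Theory Num.Theory.
Local Open Scope ring_scope.

(* ceil(xi) as a natural number (xi > 0 in the statement, so ceil xi >= 1) *)
Definition ceilN {R : realType} (xi : R) : nat := `|Num.ceil xi|%N.

Definition mu {R : realType} (N sigma nu S1 : R) (a1 a2 : bool) : R :=
  sigma * S1 + sigma * (N - S1) + (a1%:R) * nu * S1 + (a2%:R) * nu * (N - S1).

Definition Lambda {R : realType} (xi m : R) : R :=
  \sum_(eta < ceilN xi) expR (- m) * m ^+ eta / (eta`!)%:R.

Definition Qsharp {R : realType} (N P1 sigma nu xi : R)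
  (alpha beta : bool -> bool -> R) (S1 : R) : R :=
  P1 * (\sum_(a : bool * bool) beta a.1 a.2 * Lambda xi (mu N sigma nu S1 a.1 a.2))
  + (1 - P1) * (\sum_(a : bool * bool)
                  alpha a.1 a.2 * (1 - Lambda xi (mu N sigma nu S1 a.1 a.2))).

Definition Upsilon {R : realType} (N P1 sigma nu xi alpha beta : R) : R :=
  (alpha * (P1 - 1) + beta * P1) * (2 + N * (nu + 2 * sigma) - 2 * (ceilN xi)%:R).

Definition local_min_on {R : realType} (lo hi : R) (f : R -> R) (x0 : R) : Prop :=
  exists2 d : R, 0 < d &
    forall s, lo <= s <= hi -> `|s - x0| < d -> f x0 <= f s.
Definition local_max_on {R : realType} (lo hi : R) (f : R -> R) (x0 : R) : Prop :=
  exists2 d : R, 0 < d &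
    forall s, lo <= s <= hi -> `|s - x0| < d -> f s <= f x0.

(* Main.v *)
Require Import Defs.
From HB Require Import structures.
From mathcomp Require Import all_boot all_order all_algebra.
From mathcomp Require Import all_classical all_reals all_analysis.
From mathcomp Require Import ring lra.
Import Order.TTheory GRing.Theory Num.Theory numFieldNormedType.Exports.
Local Open Scope ring_scope.
Section S. Variable R : realType.

Definition LamK (K : nat) (m : R) : R :=
  \sum_(eta < K) expR (- m) * m ^+ eta / (eta`!)%:R.

Definition gk (n : nat) (m : R) : R := expR (- m) * m ^+ n / (n`!)%:R.

Lemma der_expN (x : R) : is_derive x 1 (fun m : R => expR (- m)) (- expR (- x)).
Proof.
have := @is_derive1_comp R expR (fun m : R => - m) x (expR (- x)) (-1).
by rewrite mulrN1; apply.
Qed.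

Lemma der_term (n : nat) (x : R) :
  is_derive x 1 (gk n.+1) (gk n x - gk n.+1 x).
Proof.
pose c : R := ((n.+1)`!%:R)^-1.
have hX : is_derive x 1 (fun m : R => m ^+ n.+1) ((n.+1)%:R * x ^+ n).
  have := is_deriveX n.+1 (@is_derive_id _ _ x 1).
  rewrite exprfctE /= scaler1 => h; exact: h.
have hM : is_derive x 1 ((fun m : R => expR (- m)) * (fun m : R => m ^+ n.+1))
   (expR (- x) *: ((n.+1)%:R * x ^+ n) + x ^+ n.+1 *: (- expR (- x))).
  exact: is_deriveM (der_expN x) hX.
have hZ := is_deriveZ c hM.
have e : gk n.+1 = c \*: ((fun m : R => expR (- m)) * (fun m : R => m ^+ n.+1)).
  by apply/funext => m; rewrite /gk /= mulrC.
suff -> : gk n x - gk n.+1 x =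
  c *: (expR (- x) *: ((n.+1)%:R * x ^+ n) + x ^+ n.+1 *: (- expR (- x))).
  by rewrite e.
rewrite /gk /c factS natrM invfM.
have h : (n.+1)%:R != 0 :> R by rewrite pnatr_eq0.
have h2 : (n`!)%:R != 0 :> R by rewrite pnatr_eq0 -lt0n fact_gt0.
have sE : forall a b : R, a *: b = a * b by [].
rewrite /= !sE; field.
by rewrite h2 addrC natr1 h.
Qed.

Lemma der_LamK (n : nat) (x : R) : is_derive x 1 (LamK n.+1) (- gk n x).
Proof.
elim: n x => [|n IH] x.
  have -> : LamK 1 = (fun m => expR (- m)).
    apply/funext => m; rewrite /LamK big_ord1 expr0 mulr1 /= divr1 //.
  have -> : - gk 0 x = - expR (- x) by rewrite /gk expr0 mulr1 divr1.
  exact: der_expN.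
have -> : LamK n.+2 = LamK n.+1 + gk n.+1.
  by apply/funext => m; rewrite /LamK big_ord_recr /=.
apply: is_derive_eq; first exact: is_deriveD (IH x) (der_term n x).
rewrite /=; lra.
Qed.

Lemma gk_scale n m : gk n m = (expR (- m) * m ^+ n) * ((n`!)%:R)^-1.
Proof. by []. Qed.

Lemma fact_inv_ge0 n : 0 <= ((n`!)%:R : R)^-1.
Proof. by rewrite invr_ge0 ler0n. Qed.

Lemma gk_decr n y x : n%:R <= y -> 0 < y -> y <= x -> gk n x <= gk n y.
Proof.
move=> ny y0 yx.
rewrite !gk_scale; apply: ler_wpM2r; first exact: fact_inv_ge0.
have x0 : 0 < x by apply: lt_le_trans yx.
set t := (x - y) / y.
have ty : t * y = x - y by rewrite /t divfK // gt_eqF.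
have t0 : 0 <= t by rewrite /t divr_ge0 // ?subr_ge0 // ltW.
have h1 : x / y <= expR t.
  have := expR_ge1Dx t; congr (_ <= _); rewrite /t; field; by rewrite gt_eqF.
have h2 : (x / y) ^+ n <= expR t ^+ n.
  apply: lerXn2r => //; rewrite nnegrE ?expR_ge0 //; exact: divr_ge0 (ltW x0) (ltW y0).
rewrite -expRM_natl in h2.
have h3 : n%:R * t <= x - y by nra.
have h4 : expR (n%:R * t) <= expR (x - y) by rewrite ler_expR.
have e1 : x ^+ n = (x / y) ^+ n * y ^+ n by rewrite -exprMn divfK // gt_eqF.
have yn0 : 0 <= y ^+ n by rewrite exprn_ge0 // ltW.
have h5 : x ^+ n <= expR (x - y) * y ^+ n.
  rewrite e1; apply: ler_wpM2r => //; exact: le_trans h2 h4.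
have : expR (- x) * x ^+ n <= expR (- x) * (expR (x - y) * y ^+ n).
  by apply: ler_wpM2l => //; rewrite expR_ge0.
by rewrite mulrA -expRD (_ : - x + (x - y) = - y) //; ring.
Qed.

Lemma gk_incr n y x : 0 < y -> y <= x -> x <= n%:R -> gk n y <= gk n x.
Proof.
move=> y0 yx xn.
rewrite !gk_scale; apply: ler_wpM2r; first exact: fact_inv_ge0.
have x0 : 0 < x by apply: lt_le_trans yx.
set t := (x - y) / x.
have tx : t * x = x - y by rewrite /t divfK // gt_eqF.
have t0 : 0 <= t by rewrite /t divr_ge0 // ?subr_ge0 // ltW.
have h1 : y / x <= expR (- t).
  have := expR_ge1Dx (- t); congr (_ <= _); rewrite /t; field; by rewrite gt_eqF.
have h2 : (y / x) ^+ n <= expR (- t) ^+ n.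
  apply: lerXn2r => //; rewrite nnegrE ?expR_ge0 //; exact: divr_ge0 (ltW y0) (ltW x0).
rewrite -expRM_natl in h2.
have h3 : n%:R * - t <= y - x by nra.
have h4 : expR (n%:R * - t) <= expR (y - x) by rewrite ler_expR.
have e1 : y ^+ n = (y / x) ^+ n * x ^+ n by rewrite -exprMn divfK // gt_eqF.
have xn0 : 0 <= x ^+ n by rewrite exprn_ge0 // ltW.
have h5 : y ^+ n <= expR (y - x) * x ^+ n.
  rewrite e1; apply: ler_wpM2r => //; exact: le_trans h2 h4.
have : expR (- y) * y ^+ n <= expR (- y) * (expR (y - x) * x ^+ n).
  by apply: ler_wpM2l => //; rewrite expR_ge0.
by rewrite mulrA -expRD (_ : - y + (y - x) = - x) //; ring.
Qed.

Lemma ndecr_of_der (f f' : R -> R) (a b : R) :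
  (forall x : R, is_derive x (1 : R) f (f' x)) ->
  (forall x, a < x < b -> 0 <= f' x) ->
  forall x y, a <= x -> x <= y -> y <= b -> f x <= f y.
Proof.
move=> hd hpos.
have dv : forall x, derivable f x 1 by move=> x; case: (hd x).
apply: ger0_derive1_ndecr.
- by move=> x _; exact: dv.
- move=> x; rewrite in_itv /= => /hpos; rewrite derive1E.
  by rewrite (@derive_val _ _ _ _ _ _ _ (hd x)).
- apply: continuous_subspaceT => x.
  exact/differentiable_continuous/derivable1_diffP.
Qed.

Lemma nincr_of_der (f f' : R -> R) (a b : R) :
  (forall x : R, is_derive x (1 : R) f (f' x)) ->
  (forall x, a < x < b -> f' x <= 0) ->
  forall x y, a <= x -> x <= y -> y <= b -> f y <= f x.
Proof.
move=> hd hneg x y ax xy yb.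
have H := @ndecr_of_der (fun z => - f z) (fun z => - f' z) a b.
have H1 : forall z : R, is_derive z 1 (fun z => - f z) (- f' z).
  by move=> z; have hz := is_deriveN (hd z); exact hz.
have H2 : forall z : R, a < z < b -> 0 <= - f' z.
  by move=> z /hneg; rewrite oppr_ge0.
have := H H1 H2 x y ax xy yb.
by rewrite lerN2.
Qed.

Lemma D_deriv (n : nat) (m0 u : R) : is_derive u (1 : R)
  (fun u => LamK n.+1 (u + m0) + LamK n.+1 (m0 - u)) (gk n (m0 - u) - gk n (u + m0)).
Proof.
have h1 : is_derive u 1 (LamK n.+1 \o shift m0) (- gk n (u + m0) * 1).
  exact: is_derive1_comp (der_LamK _ _) (is_derive_shift _ _ _).
have hg : is_derive u 1 (fun z : R => m0 - z) (-1).
  have := is_deriveB (@is_derive_cst R R R m0 u 1) (@is_derive_id R R u 1).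
  by rewrite sub0r.
have h2 : is_derive u 1 (LamK n.+1 \o (fun z : R => m0 - z)) (- gk n (m0 - u) * -1).
  exact: is_derive1_comp (der_LamK _ _) hg.
have := is_deriveD h1 h2.
rewrite mulr1 mulrN1 opprK [X in is_derive _ _ _ X]addrC => h; exact h.
Qed.

Lemma sym_ext (P : R -> Prop) (m0 d : R) (F : R -> R) :
  (forall v, 0 <= v < d -> P (F (v + m0) + F (m0 - v))) ->
  forall u, `|u| < d -> P (F (u + m0) + F (m0 - u)).
Proof.
move=> key u hu; have [u0|u0] := leP 0 u.
  by apply: key; rewrite u0 /=; rewrite ger0_norm in hu.
have := key (- u); rewrite ltr0_norm // in hu.
rewrite oppr_ge0 hu (ltW u0) => /(_ isT) h.
rewrite opprK (addrC (- u) m0) (addrC m0 u) in h.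
by rewrite [X in P X]addrC.
Qed.

Lemma convex_near n m0 : n%:R < m0 -> exists2 d : R, 0 < d &
  forall u, `|u| < d -> 2 * LamK n.+1 m0 <= LamK n.+1 (u + m0) + LamK n.+1 (m0 - u).
Proof.
move=> nm; exists ((m0 - n%:R) / 2); first by rewrite divr_gt0 // subr_gt0.
apply: (@sym_ext (fun z => 2 * LamK n.+1 m0 <= z)) => v /andP [v0 vd].
have n0 : 0 <= n%:R :> R by rewrite ler0n.
have := @ndecr_of_der (fun u => LamK n.+1 (u + m0) + LamK n.+1 (m0 - u))
  (fun u => gk n (m0 - u) - gk n (u + m0)) 0 ((m0 - n%:R) / 2) (D_deriv n m0).
move=> /(_ _ 0 v (lexx 0) v0 (ltW vd)) /=.
rewrite add0r subr0 => H.
have -> : 2 * LamK n.+1 m0 = LamK n.+1 m0 + LamK n.+1 m0 by ring.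
apply: H.
move=> x /andP [x0 xd]; rewrite subr_ge0; apply: gk_decr; lra.
Qed.

Lemma concave_near n m0 : 0 < m0 -> m0 < n%:R -> exists2 d : R, 0 < d &
  forall u, `|u| < d -> LamK n.+1 (u + m0) + LamK n.+1 (m0 - u) <= 2 * LamK n.+1 m0.
Proof.
move=> m00 nm; exists (Num.min m0 (n%:R - m0) / 2).
  by rewrite divr_gt0 // lt_min m00 subr_gt0.
apply: (@sym_ext (fun z => z <= 2 * LamK n.+1 m0)) => v /andP [v0 vd].
have := @nincr_of_der (fun u => LamK n.+1 (u + m0) + LamK n.+1 (m0 - u))
  (fun u => gk n (m0 - u) - gk n (u + m0)) 0 (Num.min m0 (n%:R - m0) / 2) (D_deriv n m0).
move=> /(_ _ 0 v (lexx 0) v0 (ltW vd)) /=.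
rewrite add0r subr0 => H.
have -> : 2 * LamK n.+1 m0 = LamK n.+1 m0 + LamK n.+1 m0 by ring.
apply: H.
move=> x /andP [x0 xd]; rewrite subr_le0.
have h1 : Num.min m0 (n%:R - m0) <= m0 by rewrite ge_min lexx.
have h2 : Num.min m0 (n%:R - m0) <= n%:R - m0 by rewrite ge_min lexx orbT.
apply: gk_incr; lra.
Qed.
End S.
Lemma sum_bb0 (R : realType) (f : bool -> bool -> R) :
  \sum_(a : bool * bool) f a.1 a.2 = f true true + f true false + f false true + f false false.
Proof. by rewrite -(pair_big xpredT xpredT f) /= !big_bool /=; ring. Qed.

Lemma sum_bb (R : realType) (g : bool * bool -> R) :
  \sum_(a : bool * bool) g a = g (true, true) + g (true, false) + g (false, true) + g (false, false).
Proof.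
rewrite -(@sum_bb0 R (fun a b => g (a, b))); apply: eq_bigr => -[a b] //.
Qed.

Lemma scale_lt (R : realType) (nu d v : R) : 0 < nu -> `|v| < d / nu -> `|nu * v| < d.
Proof.
move=> nu0 hv; rewrite normrM gtr0_norm //.
by rewrite -ltr_pdivlMl // mulrC.
Qed.

Lemma fin_min (R : realType) (lo hi : R) (Q F : R -> R) (x0 c nu d : R) :
  0 < nu -> 0 < d -> (forall s, Q s = Q x0 + c * F (nu * (s - x0))) ->
  (forall u, `|u| < d -> 0 <= c * F u) -> local_min_on lo hi Q x0.
Proof.
move=> nu0 d0 hQ hF; exists (d / nu); first by rewrite divr_gt0.
move=> s _ hs; rewrite (hQ s) lerDl; apply: hF; exact: scale_lt.
Qed.

Lemma fin_max (R : realType) (lo hi : R) (Q F : R -> R) (x0 c nu d : R) :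
  0 < nu -> 0 < d -> (forall s, Q s = Q x0 + c * F (nu * (s - x0))) ->
  (forall u, `|u| < d -> c * F u <= 0) -> local_max_on lo hi Q x0.
Proof.
move=> nu0 d0 hQ hF; exists (d / nu); first by rewrite divr_gt0.
move=> s _ hs; rewrite (hQ s) gerDl; apply: hF; exact: scale_lt.
Qed.

Theorem lemma3 (R : realType) (N P1 sigma nu xi : R)
  (alpha beta : bool -> bool -> R) :
  0 < N -> 0 < P1 < 1 -> 0 <= sigma -> 0 < nu -> 0 < xi ->
  (forall a1 a2, 0 <= alpha a1 a2) -> (forall a1 a2, 0 <= beta a1 a2) ->
  alpha true false = alpha false true ->
  beta true false = beta false true ->
  let Ups := Upsilon N P1 sigma nu xi (alpha true false) (beta true false) in
  (0 < Ups -> local_min_on 0 N (Qsharp N P1 sigma nu xi alpha beta) (N / 2)) /\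
  (Ups < 0 -> local_max_on 0 N (Qsharp N P1 sigma nu xi alpha beta) (N / 2)).
Proof.
move=> N0 /andP[P0 P1lt] s0 nu0 xi0 ha hb hae hbe Ups.
have Kpos : (0 < Defs.ceilN xi)%N by rewrite /Defs.ceilN absz_gt0 gt_eqF // ceil_gt0.
have [n Kn] : exists n, Defs.ceilN xi = n.+1 by exists (Defs.ceilN xi).-1; rewrite prednK.
have LL : forall m, Lambda xi m = LamK R n.+1 m by move=> m; rewrite /Lambda Kn.
set m0 := sigma * N + nu * N / 2.
set c := P1 * beta true false - (1 - P1) * alpha true false.
set F := fun u => LamK R n.+1 (u + m0) + LamK R n.+1 (m0 - u) - 2 * LamK R n.+1 m0.
have mff : forall S, mu N sigma nu S false false = sigma * N by move=> S; rewrite /mu /=; ring.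
have mtt : forall S, mu N sigma nu S true true = sigma * N + nu * N by move=> S; rewrite /mu /=; ring.
have mtf : forall S, mu N sigma nu S true false = nu * (S - N / 2) + m0.
  by move=> S; rewrite /mu /m0 /=; field.
have mft : forall S, mu N sigma nu S false true = m0 - nu * (S - N / 2).
  by move=> S; rewrite /mu /m0 /=; field.
have hQ : forall s, Qsharp N P1 sigma nu xi alpha beta s =
   Qsharp N P1 sigma nu xi alpha beta (N / 2) + c * F (nu * (s - N / 2)).
  move=> s; rewrite /Qsharp !sum_bb /= !mff !mtt !mtf !mft !LL subrr mulr0 add0r subr0.
  rewrite /F /c -hae -hbe; ring.
have m0pos : 0 < m0 by rewrite /m0; nra.
have UpsE : Ups = 2 * c * (m0 - n%:R).
  by rewrite /Ups /Upsilon Kn -natr1 /c /m0; field.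
split => hU.
- have [cpos|cneg|c0] := ltrgtP 0 c; last by move: hU; rewrite UpsE -c0; lra.
  + have hm : n%:R < m0 by move: hU; rewrite UpsE; nra.
    have [d d0 hd] := @convex_near R _ _ hm.
    apply: (@fin_min R 0 N _ F _ c nu d nu0 d0 hQ) => u /hd hu; rewrite /F; nra.
  + have hm : m0 < n%:R by move: hU; rewrite UpsE; nra.
    have [d d0 hd] := @concave_near R _ _ m0pos hm.
    apply: (@fin_min R 0 N _ F _ c nu d nu0 d0 hQ) => u /hd hu; rewrite /F; nra.
- have [cpos|cneg|c0] := ltrgtP 0 c; last by move: hU; rewrite UpsE -c0; lra.
  + have hm : m0 < n%:R by move: hU; rewrite UpsE; nra.
    have [d d0 hd] := @concave_near R _ _ m0pos hm.
    apply: (@fin_max R 0 N _ F _ c nu d nu0 d0 hQ) => u /hd hu; rewrite /F; nra.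
  + have hm : n%:R < m0 by move: hU; rewrite UpsE; nra.
    have [d d0 hd] := @convex_near R _ _ hm.
    apply: (@fin_max R 0 N _ F _ c nu d nu0 d0 hQ) => u /hd hu; rewrite /F; nra.
Qed.
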